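(* For every positive $\alpha=(\alpha_x)_{x\in V}$ and every $k\in\mathbb N$, $$\inf_{\xi\in\Xi_{k-1}}\mathrm{gap}_{\rm RW}(\alpha+\xi)\ge\frac{\alpha_{\min}}{\alpha_{\min}+k-1}\,\mathrm{gap}_{\rm RW}(\alpha),$$ where $\alpha_{\min}=\min_x\alpha_x$.
   Context: $V$ is a finite set with symmetric non-negative weights $c_{xy}=c_{yx}\ge0$ forming a connected graph. $\Xi_{k-1}:=\{\xi\in\mathbb N_0^V:\sum_x\xi_x=k-1\}$ and $\alpha+\xi=(\alpha_x+\xi_x)_{x\in V}$. For a positive weight vector $\beta$, $\mathrm{gap}_{\rm RW}(\beta)$ is the smallest nonzero eigenvalue of $-A_\beta$, where $A_\beta\phi(x)=\sum_yc_{xy}\beta_y(\phi(y)-\phi(x))$ for $\phi:V\to\mathbb R$. *)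

(* Defs.v *)
From HB Require Import structures.
From mathcomp Require Import all_boot all_order all_algebra.
From mathcomp Require Import all_classical all_reals.
Set Implicit Arguments. Unset Strict Implicit. Unset Printing Implicit Defensive.
Import Order.TTheory GRing.Theory Num.Theory.
Local Open Scope ring_scope.
Local Open Scope classical_set_scope.

(* V = 'I_n.  Generator A_beta as a matrix acting on column vectors phi:
   (A_beta phi)(x) = sum_y c x y * beta y * (phi y - phi x). *)
Definition gen_mx (R : realType) (n : nat) (c : 'I_n -> 'I_n -> R)
  (beta : 'I_n -> R) : 'M[R]_n :=
  \matrix_(x, y) (c x y * beta y - (x == y)%:R * \sum_(z < n) c x z * beta z).

(* gap_RW(beta): smallest nonzero eigenvalue of -A_beta.  MathComp's
   [eigenvalue] uses row vectors (v *m g = a v), so we apply it to the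
   transpose, which has the same eigenvalues. *)
Definition gapRW (R : realType) (n : nat) (c : 'I_n -> 'I_n -> R)
  (beta : 'I_n -> R) : R :=
  inf [set l : R | eigenvalue (- gen_mx c beta)^T l /\ l != 0].

Definition wconnected (R : realType) (n : nat) (c : 'I_n -> 'I_n -> R) :=
  forall x y : 'I_n, connect [rel u v | 0 < c u v] x y.

Definition Xi (n m : nat) : set ('I_n -> nat) :=
  [set xi | (\sum_(x < n) xi x)%N = m].
Arguments Xi : clear implicits.

(* Main.v *)
Require Import Defs.
From HB Require Import structures.
From mathcomp Require Import all_boot all_order all_algebra.
From mathcomp Require Import all_classical all_reals all_analysis.
From mathcomp Require Import ring lra.
Import Order.TTheory GRing.Theory Num.Theory.
Import numFieldNormedType.Exports.
Local Open Scope ring_scope.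
Local Open Scope classical_set_scope.
Set Implicit Arguments. Unset Strict Implicit. Unset Printing Implicit Defensive.



Definition Lf (R : realType) n (c : 'I_n -> 'I_n -> R) (b f : 'I_n -> R) x :=
  \sum_(y < n) c x y * b y * (f x - f y).
Definition Bf (R : realType) n (c : 'I_n -> 'I_n -> R) (b f h : 'I_n -> R) :=
  \sum_(x < n) \sum_(y < n) c x y * b x * b y * ((f x - f y) * (h x - h y)).
Definition Nf (R : realType) n (b f : 'I_n -> R) := \sum_(x < n) b x * f x ^+ 2.
Definition Sf (R : realType) n (b f : 'I_n -> R) := \sum_(x < n) b x * f x.

Lemma sum_delta (R : realType) n (x : 'I_n) (F : 'I_n -> R) :
  \sum_(j < n) (x == j)%:R * F j = F x.
Proof.
rewrite (bigD1 x) //= eqxx mul1r big1 ?addr0 // => j jx.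
by rewrite eq_sym (negbTE jx) mul0r.
Qed.

Lemma genE (R : realType) n (c : 'I_n -> 'I_n -> R) b (v : 'rV[R]_n) x :
  (v *m (- gen_mx c b)^T) ord0 x = Lf c b (fun i => v ord0 i) x.
Proof.
rewrite !mxE /Lf.
under eq_bigr => j _ do rewrite !mxE.
transitivity (\sum_(j < n) (x == j)%:R * (v ord0 j * \sum_(z < n) c x z * b z)
   - \sum_(j < n) c x j * b j * v ord0 j).
  by rewrite -sumrB; apply: eq_bigr => j _; ring.
rewrite sum_delta.
transitivity (v ord0 x * \sum_(z < n) c x z * b z - \sum_(j < n) c x j * b j * v ord0 j) => //.
by rewrite mulr_sumr -sumrB; apply: eq_bigr => j _; ring.
Qed.



Lemma swap2 (R : realType) n (F : 'I_n -> 'I_n -> R) :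
  \sum_(x < n) \sum_(y < n) F x y = \sum_(x < n) \sum_(y < n) F y x.
Proof. exact: exchange_big. Qed.

Lemma sum_L (R : realType) n (c : 'I_n -> 'I_n -> R) (c_sym : forall x y, c x y = c y x) b f :
  \sum_(x < n) b x * Lf c b f x = 0.
Proof.
set T := \sum_(x < n) \sum_(y < n) c x y * b x * b y * (f x - f y).
have -> : \sum_(x < n) b x * Lf c b f x = T.
  apply: eq_bigr => x _; rewrite /Lf mulr_sumr; apply: eq_bigr => y _; ring.
have : T = - T.
  rewrite {1}/T swap2 /T -sumrN; apply: eq_bigr => x _; rewrite -sumrN.
  by apply: eq_bigr => y _; rewrite c_sym; ring.
lra.
Qed.

Lemma quad_L (R : realType) n (c : 'I_n -> 'I_n -> R) (c_sym : forall x y, c x y = c y x) b f h :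
  2 * \sum_(x < n) b x * h x * Lf c b f x = Bf c b f h.
Proof.
set T := \sum_(x < n) \sum_(y < n) c x y * b x * b y * (h x * (f x - f y)).
have -> : \sum_(x < n) b x * h x * Lf c b f x = T.
  apply: eq_bigr => x _; rewrite /Lf mulr_sumr; apply: eq_bigr => y _; ring.
have -> : Bf c b f h = T + \sum_(x < n) \sum_(y < n) c x y * b x * b y * (h y * (f y - f x)).
  rewrite /Bf -big_split; apply: eq_bigr => x _ /=; rewrite -big_split; apply: eq_bigr => y _ /=; ring.
have -> : \sum_(x < n) \sum_(y < n) c x y * b x * b y * (h y * (f y - f x)) = T.
  rewrite swap2 /T; apply: eq_bigr => x _; apply: eq_bigr => y _; rewrite c_sym; ring.
ring.
Qed.

Lemma Bf_ge0 (R : realType) n (c : 'I_n -> 'I_n -> R) (c_ge0 : forall x y, 0 <= c x y) (b : 'I_n -> R)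
  (b_ge0 : forall x, 0 <= b x) f : 0 <= Bf c b f f.
Proof.
apply: sumr_ge0 => x _; apply: sumr_ge0 => y _.
rewrite -expr2; apply: mulr_ge0; last exact: sqr_ge0. by rewrite !mulr_ge0.
Qed.

Lemma Bf_mono (R : realType) n (c : 'I_n -> 'I_n -> R) (c_ge0 : forall x y, 0 <= c x y) a b
  (a_ge0 : forall x, 0 <= a x) (ab : forall x, a x <= b x) f : Bf c a f f <= Bf c b f f.
Proof.
apply: ler_sum => x _; apply: ler_sum => y _.
rewrite -expr2; apply: ler_wpM2r; first exact: sqr_ge0.
rewrite -!mulrA; apply: ler_wpM2l => //.
apply: ler_pM => //; exact: le_trans (ab _).
Qed.

Lemma Bf_shift (R : realType) n (c : 'I_n -> 'I_n -> R) b f m :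
  Bf c b (fun x => f x - m) (fun x => f x - m) = Bf c b f f.
Proof. apply: eq_bigr => x _; apply: eq_bigr => y _; ring. Qed.

Lemma Bf_expand (R : realType) n (c : 'I_n -> 'I_n -> R) (c_sym : forall x y, c x y = c y x) b f h s :
  Bf c b (fun x => f x + s * h x) (fun x => f x + s * h x) =
  Bf c b f f + 2 * s * Bf c b f h + s ^+ 2 * Bf c b h h.
Proof.
rewrite /Bf !mulr_sumr -!big_split; apply: eq_bigr => x _ /=.
rewrite !mulr_sumr -!big_split; apply: eq_bigr => y _ /=; ring.
Qed.

Lemma Nf_expand (R : realType) n (b f h : 'I_n -> R) s :
  Nf b (fun x => f x + s * h x) = Nf b f + 2 * s * (\sum_(x < n) b x * f x * h x) + s ^+ 2 * Nf b h.
Proof.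
rewrite /Nf !mulr_sumr -!big_split; apply: eq_bigr => x _ /=; ring.
Qed.

Lemma eig_facts (R : realType) n (c : 'I_n -> 'I_n -> R) (c_sym : forall x y, c x y = c y x) b f l :
  (forall x, Lf c b f x = l * f x) ->
  l * Sf b f = 0 /\ 2 * l * Nf b f = Bf c b f f.
Proof.
move=> Hl; split.
  rewrite -(sum_L c_sym b f) /Sf mulr_sumr; apply: eq_bigr => x _; rewrite Hl; ring.
rewrite -(quad_L c_sym) /Nf -mulrA mulr_sumr; congr (_ * _); apply: eq_bigr => x _; rewrite Hl; ring.
Qed.

Lemma Bf0_const (R : realType) n (c : 'I_n -> 'I_n -> R) (c_ge0 : forall x y, 0 <= c x y)
  (c_conn : wconnected c) (b : 'I_n -> R) (b_pos : forall x, 0 < b x) f :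
  Bf c b f f = 0 -> forall x y, f x = f y.
Proof.
move=> H.
have tge0 : forall x y, 0 <= c x y * b x * b y * ((f x - f y) * (f x - f y)).
  move=> x y; rewrite -expr2; apply: mulr_ge0; last exact: sqr_ge0.
  by rewrite !mulr_ge0 // ltW.
have term : forall x y, 0 < c x y -> f x = f y.
  move=> x y cxy.
  have Hx := psumr_eq0P (fun x _ => sumr_ge0 _ (fun y _ => tge0 x y)) H (i:=x) isT.
  have := psumr_eq0P (fun y _ => tge0 x y) Hx (i:=y) isT.
  move/eqP; rewrite !mulf_eq0 (gt_eqF cxy) !(gt_eqF (b_pos _)) orbb subr_eq0 /=.
  by rewrite orbb => /eqP.
move=> x y; have /connectP [p pth ->] := c_conn x y.
elim: p x pth => [|z p IH] x //= /andP [exz pth].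
by rewrite (term _ _ exz) IH.
Qed.



Definition fv (R : realType) n (v : 'rV[R]_n) : 'I_n -> R := fun i => v ord0 i.

Lemma cont_sum (R : realType) n (F : 'I_n -> 'rV[R]_n -> R) :
  (forall i, continuous (F i)) -> continuous (fun v => \sum_(i < n) F i v).
Proof.
move=> Fc; rewrite unlock /reducebig.
elim: (index_enum _) => [|a r IH] /=.
  exact: cst_continuous.
move=> v; apply: continuousD; [exact: Fc | exact: IH].
Qed.

Lemma cont_coord (R : realType) n (i : 'I_n) : continuous (fun v : 'rV[R]_n => v ord0 i).
Proof. exact: coord_continuous. Qed.

Lemma cont_Bf (R : realType) n (c : 'I_n -> 'I_n -> R) (b : 'I_n -> R) :
  continuous (fun v : 'rV[R]_n => Bf c b (fv v) (fv v)).
Proof.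
apply: cont_sum => x; apply: cont_sum => y v.
apply: (@continuousM _ _ (fun=> c x y * b x * b y) (fun w => (fv w x - fv w y) * (fv w x - fv w y))).
  exact: cst_continuous.
apply: (@continuousM _ _ (fun w => fv w x - fv w y) (fun w => fv w x - fv w y));
  apply: continuousB; exact: cont_coord.
Qed.

Lemma cont_Nf (R : realType) n (b : 'I_n -> R) :
  continuous (fun v : 'rV[R]_n => Nf b (fv v)).
Proof.
apply: cont_sum => x v.
apply: (@continuousM _ _ (fun=> b x) (fun w => fv w x ^+ 2)); first exact: cst_continuous.
apply: (@continuousM _ _ (fun w => fv w x) (fun w => fv w x)); exact: cont_coord.
Qed.

Lemma cont_Sf (R : realType) n (b : 'I_n -> R) :
  continuous (fun v : 'rV[R]_n => Sf b (fv v)).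
Proof.
apply: cont_sum => x v.
apply: (@continuousM _ _ (fun=> b x) (fun w => fv w x)); first exact: cst_continuous.
exact: cont_coord.
Qed.

Definition Wset (R : realType) n (b : 'I_n -> R) : set 'rV[R]_n :=
  [set v | Sf b (fv v) = 0 /\ Nf b (fv v) = 1].

Lemma Nf_term (R : realType) n (b f : 'I_n -> R) (b_ge0 : forall x, 0 <= b x) i :
  b i * f i ^+ 2 <= Nf b f.
Proof.
rewrite /Nf (bigD1 i) //= lerDl; apply: sumr_ge0 => j _.
by rewrite mulr_ge0 ?sqr_ge0.
Qed.

Lemma Wset_compact (R : realType) n (b : 'I_n -> R) (b_pos : forall x, 0 < b x) :
  compact (Wset b).
Proof.
set B := 1 + \sum_(j < n) (b j)^-1.
have SB : forall i, (b i)^-1 <= \sum_(j < n) (b j)^-1.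
  move=> i; rewrite (bigD1 i) //= lerDl; apply: sumr_ge0 => j _.
  by rewrite invr_ge0 ltW.
apply: (@subclosed_compact _ _ [set v : 'rV[R]_n | forall i, `[(- B), B]%classic (v ord0 i)]).
- have -> : Wset b = (fun v => Sf b (fv v)) @^-1` [set x | x = 0] `&`
      (fun v => Nf b (fv v)) @^-1` [set x | x = 1] by [].
  apply: closedI; apply: preimage_closed.
  + move=> v _; exact: cont_Sf.
  + exact: closed_eq.
  + move=> v _; exact: cont_Nf.
  + exact: closed_eq.
- apply: (@rV_compact _ _ (fun=> `[(- B), B]%classic)) => i; exact: segment_compact.
- move=> v [_ Nv] i /=.
  rewrite in_itv /= -ler_norml.
  have bi := b_pos i.
  have h1 : b i * (v ord0 i) ^+ 2 <= 1.
    by rewrite -Nv; apply: (@Nf_term _ _ b (fv v)) => x; exact: ltW.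
  have h2 : (v ord0 i) ^+ 2 <= (b i)^-1.
    rewrite -[_ ^+ 2]mul1r -(mulVf (lt0r_neq0 bi)) -mulrA.
    by rewrite -[X in _ <= X]mulr1 ler_wpM2l // invr_ge0 ltW.
  have h3 := SB i.
  have h0 : 0 <= \sum_(j < n) (b j)^-1 by apply: sumr_ge0 => j _; rewrite invr_ge0 ltW.
  rewrite /B.
  have [le1|gt1] := lerP `|v ord0 i| 1; first lra.
  have : `|v ord0 i| <= `|v ord0 i| ^+ 2.
    by rewrite expr2 ler_peMr // ltW.
  rewrite real_normK ?num_real //.
  lra.
Qed.

Lemma fv_row (R : realType) n (g : 'I_n -> R) : fv (\row_i g i) = g.
Proof. by apply: funext => i; rewrite /fv mxE. Qed.

Lemma Sf_scale (R : realType) n (b h : 'I_n -> R) t : Sf b (fun i => h i * t) = Sf b h * t.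
Proof. by rewrite /Sf mulr_suml; apply: eq_bigr => i _; ring. Qed.

Lemma Nf_scale (R : realType) n (b h : 'I_n -> R) t : Nf b (fun i => h i * t) = Nf b h * t ^+ 2.
Proof. by rewrite /Nf mulr_suml; apply: eq_bigr => i _; ring. Qed.

Lemma Bf_scale (R : realType) n c (b h : 'I_n -> R) t :
  Bf c b (fun i => h i * t) (fun i => h i * t) = Bf c b h h * t ^+ 2.
Proof.
rewrite /Bf mulr_suml; apply: eq_bigr => i _; rewrite mulr_suml.
by apply: eq_bigr => j _; ring.
Qed.

Lemma Nf_ge0 (R : realType) n (b h : 'I_n -> R) (b_ge0 : forall x, 0 <= b x) : 0 <= Nf b h.
Proof. by apply: sumr_ge0 => i _; rewrite mulr_ge0 ?sqr_ge0. Qed.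

Lemma normalize (R : realType) n (b h : 'I_n -> R) (b_ge0 : forall x, 0 <= b x) :
  Sf b h = 0 -> Nf b h != 0 ->
  Wset b (\row_i (h i * (Num.sqrt (Nf b h))^-1)).
Proof.
move=> S0 N0; rewrite /Wset /= fv_row Sf_scale Nf_scale S0 mul0r; split => //.
have Nge := Nf_ge0 h b_ge0.
by rewrite exprVn sqr_sqrtr // mulfV.
Qed.

Lemma quad0 (R : realType) (D q : R) : (forall s, 0 <= 2 * s * D + s ^+ 2 * q) -> D = 0.
Proof.
move=> H.
set t := (`|q| + 1)^-1.
have tpos : 0 < t by rewrite invr_gt0; apply: ltr_wpDl.
have tq : t * q < 1.
  have : t * (`|q| + 1) = 1 by rewrite mulVf // gt_eqF // ltr_wpDl.
  have : q <= `|q| := ler_norm q.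
  nra.
have := H (- D * t).
have -> : 2 * (- D * t) * D + (- D * t) ^+ 2 * q = D ^+ 2 * (t * (t * q - 2)) by ring.
have neg : t * (t * q - 2) < 0 by nra.
move=> h; apply/eqP; rewrite -sqrf_eq0; apply/eqP.
have : 0 <= D ^+ 2 := sqr_ge0 D.
nra.
Qed.

Lemma Sf_lin (R : realType) n (b f h : 'I_n -> R) s :
  Sf b (fun x => f x + s * h x) = Sf b f + s * Sf b h.
Proof. by rewrite /Sf mulr_sumr -big_split; apply: eq_bigr => x _ /=; ring. Qed.

Lemma rayleigh (R : realType) n (c : 'I_n -> 'I_n -> R)
  (c_sym : forall x y, c x y = c y x) (c_ge0 : forall x y, 0 <= c x y)
  (c_conn : wconnected c) (a : 'I_n -> R) (a_pos : forall x, 0 < a x) :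
  Wset a !=set0 ->
  exists l, [/\ eigenvalue (- gen_mx c a)^T l, l != 0 &
     forall h, Sf a h = 0 -> 2 * l * Nf a h <= Bf c a h h].
Proof.
move=> W0.
have a_ge0 : forall x, 0 <= a x by move=> x; exact: ltW.
have [v0 v0W v0min] := compact_EVT_min W0 (Wset_compact a_pos)
   (continuous_subspaceT (@cont_Bf _ _ c a)).
have [Sf0 Nf1] := set_mem v0W.
set f := fv v0 in Sf0 Nf1.
set mu := Bf c a f f.
have Q : forall h, Sf a h = 0 -> mu * Nf a h <= Bf c a h h.
  move=> h Sh; have [N0|N0] := eqVneq (Nf a h) 0.
    by rewrite N0 mulr0; exact: Bf_ge0.
  have := v0min _ (mem_set (normalize a_ge0 Sh N0)).
  rewrite fv_row Bf_scale => H.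
  have Nge := Nf_ge0 h a_ge0.
  have := ler_wpM2r Nge H.
  by rewrite -mulrA exprVn sqr_sqrtr // mulVf // mulr1.
have FO : forall h, Sf a h = 0 -> Bf c a f h - mu * \sum_(x < n) a x * f x * h x = 0.
  move=> h Sh.
  apply: (@quad0 _ _ (Bf c a h h - mu * Nf a h)) => s.
  have := Q (fun x => f x + s * h x).
  rewrite Sf_lin Sf0 Sh mulr0 addr0 => /(_ erefl).
  rewrite Bf_expand // Nf_expand Nf1 -/mu => H.
  have -> : 2 * s * (Bf c a f h - mu * \sum_(x < n) a x * f x * h x) +
    s ^+ 2 * (Bf c a h h - mu * Nf a h) =
    (mu + 2 * s * Bf c a f h + s ^+ 2 * Bf c a h h) -
    mu * (1 + 2 * s * (\sum_(x < n) a x * f x * h x) + s ^+ 2 * Nf a h) by ring.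
  by rewrite subr_ge0.
set r := fun x => 2 * Lf c a f x - mu * f x.
have Sr : Sf a r = 0.
  have := sum_L c_sym a f.
  rewrite /Sf /r => HL.
  have -> : \sum_(x < n) a x * (2 * Lf c a f x - mu * f x) =
     2 * (\sum_(x < n) a x * Lf c a f x) - mu * (\sum_(x < n) a x * f x).
    by rewrite !mulr_sumr -sumrB; apply: eq_bigr => x _; ring.
  by rewrite HL -/(Sf a f) Sf0; ring.
have Nr : Nf a r = 0.
  have := FO r Sr; rewrite -(quad_L c_sym) => H; rewrite -H.
  rewrite /Nf mulr_sumr mulr_sumr -sumrB; apply: eq_bigr => x _; rewrite /r; ring.
have r0 : forall x, r x = 0.
  move=> x.
  have := psumr_eq0P (fun y _ => mulr_ge0 (a_ge0 y) (sqr_ge0 (r y))) Nr (i:=x) isT.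
  by move/eqP; rewrite mulf_eq0 (gt_eqF (a_pos x)) sqrf_eq0 => /eqP.
have HL : forall x, Lf c a f x = mu / 2 * f x.
  move=> x; have := r0 x; rewrite /r => H; lra.
exists (mu / 2); split.
- apply/eigenvalueP; exists v0.
    apply/rowP => j; rewrite genE !mxE; exact: HL.
  apply/eqP => v00; move: Nf1; rewrite /f v00 /Nf big1; first by move/eqP; rewrite eq_sym oner_eq0.
  by move=> x _; rewrite /fv mxE expr0n mulr0.
- apply/eqP => mu0.
  have mu00 : mu = 0 by lra.
  have fc := Bf0_const c_ge0 c_conn a_pos mu00.
  case: (pickP (@predT 'I_n)) => [x0 _|none]; last first.
    have : Nf a f = 0 by rewrite /Nf big1 // => x; have := none x.
    by rewrite Nf1 => /eqP; rewrite oner_eq0.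
  have Sa : 0 < \sum_(x < n) a x.
    rewrite (bigD1 x0) //=; apply: ltr_wpDr; first exact: sumr_ge0.
    exact: a_pos.
  have fx0 : f x0 = 0.
    move: Sf0; rewrite /Sf (eq_bigr (fun x => a x * f x0)); last by move=> x _; rewrite (fc x x0).
    rewrite -mulr_suml => /eqP; rewrite mulf_eq0 (gt_eqF Sa) /= => /eqP //.
  move: Nf1; rewrite /Nf big1; first by move/eqP; rewrite eq_sym oner_eq0.
  by move=> x _; rewrite (fc x x0) fx0 expr0n mulr0.
- move=> h Sh; have -> : 2 * (mu / 2) = mu by lra.
  exact: Q.
Qed.



Definition Sset (R : realType) n (c : 'I_n -> 'I_n -> R) (b : 'I_n -> R) : set R :=
  [set l : R | eigenvalue (- gen_mx c b)^T l /\ l != 0].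

Lemma inf_ge (R : realType) (S : set R) (x : R) :
  (forall y, S y -> x <= y) -> (S !=set0 \/ x <= 0) -> x <= inf S.
Proof.
move=> lb [ne|x0]; first exact: lb_le_inf.
have [->|ne] := eqVneq S set0; first by rewrite inf0.
apply: lb_le_inf => //; exact/set0P.
Qed.

Lemma Nf_pos (R : realType) n (b f : 'I_n -> R) (b_pos : forall x, 0 < b x) x :
  f x != 0 -> 0 < Nf b f.
Proof.
move=> fx; rewrite /Nf (bigD1 x) //=; apply: ltr_pwDl.
  by rewrite mulr_gt0 // exprn_even_gt0.
by apply: sumr_ge0 => i _; rewrite mulr_ge0 ?sqr_ge0 // ltW.
Qed.

Lemma Nf_ex (R : realType) n (b f : 'I_n -> R) :
  Nf b f != 0 -> exists x, f x != 0.
Proof.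
move=> N0; apply/existsP; apply: contraNT N0; rewrite negb_exists => /forallP H.
rewrite /Nf big1 // => x _; have := H x; rewrite negbK => /eqP ->.
by rewrite expr0n mulr0.
Qed.

Lemma eig_vec (R : realType) n (c : 'I_n -> 'I_n -> R) (b : 'I_n -> R)
  (b_pos : forall x, 0 < b x) l :
  eigenvalue (- gen_mx c b)^T l ->
  exists f : 'I_n -> R, (forall x, Lf c b f x = l * f x) /\ 0 < Nf b f.
Proof.
move=> /eigenvalueP [v vE v0]; exists (fv v); split.
  move=> x; have := congr1 (fun M : 'rV[R]_n => M ord0 x) vE; rewrite /= genE mxE; exact.
have [x vx] : exists x, v ord0 x != 0.
  apply/existsP; apply: contraNT v0; rewrite negb_exists => /forallP H.
  apply/eqP/rowP => i; rewrite mxE; by have := H i; rewrite negbK => /eqP ->.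
exact: (@Nf_pos _ _ b (fv v) b_pos x vx).
Qed.

Lemma S_ge0 (R : realType) n (c : 'I_n -> 'I_n -> R) (c_sym : forall x y, c x y = c y x)
  (c_ge0 : forall x y, 0 <= c x y) (b : 'I_n -> R) (b_pos : forall x, 0 < b x) l :
  Sset c b l -> 0 <= l.
Proof.
move=> [/(eig_vec b_pos) [f [Hf Np]] _].
have [_ H] := eig_facts c_sym Hf.
have := Bf_ge0 c_ge0 (fun x => ltW (b_pos x)) f; rewrite -H => h.
nra.
Qed.

Lemma gap_ge0 (R : realType) n (c : 'I_n -> 'I_n -> R) (c_sym : forall x y, c x y = c y x)
  (c_ge0 : forall x y, 0 <= c x y) (b : 'I_n -> R) (b_pos : forall x, 0 < b x) :
  0 <= gapRW c b.
Proof.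
apply: inf_ge; last by right.
move=> y Sy; exact: (S_ge0 c_sym c_ge0 b_pos Sy).
Qed.

Lemma gap_le (R : realType) n (c : 'I_n -> 'I_n -> R) (c_sym : forall x y, c x y = c y x)
  (c_ge0 : forall x y, 0 <= c x y) (b : 'I_n -> R) (b_pos : forall x, 0 < b x) l :
  Sset c b l -> gapRW c b <= l.
Proof.
move=> Sl; apply: ge_inf => //; exists 0 => y Sy; exact: (S_ge0 c_sym c_ge0 b_pos Sy).
Qed.

Lemma gap_rayleigh (R : realType) n (c : 'I_n -> 'I_n -> R)
  (c_sym : forall x y, c x y = c y x) (c_ge0 : forall x y, 0 <= c x y)
  (c_conn : wconnected c) (a : 'I_n -> R) (a_pos : forall x, 0 < a x) h :
  Sf a h = 0 -> 2 * gapRW c a * Nf a h <= Bf c a h h.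
Proof.
move=> Sh.
have a_ge0 : forall x, 0 <= a x by move=> x; exact: ltW.
have [N0|N0] := eqVneq (Nf a h) 0.
  by rewrite N0 mulr0; exact: Bf_ge0.
have [l [El l0 Hl]] := rayleigh c_sym c_ge0 c_conn a_pos (ex_intro _ _ (normalize a_ge0 Sh N0)).
apply: le_trans (Hl h Sh).
have gl : gapRW c a <= l by apply: (gap_le c_sym c_ge0 a_pos); split.
have := Nf_ge0 h a_ge0.
nra.
Qed.

Lemma key_beta (R : realType) n (c : 'I_n -> 'I_n -> R)
  (c_sym : forall x y, c x y = c y x) (c_ge0 : forall x y, 0 <= c x y)
  (c_conn : wconnected c) (a b : 'I_n -> R) (a_pos : forall x, 0 < a x)
  (ab : forall x, a x <= b x) K (bK : forall x, b x <= K * a x) l :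
  Sset c b l -> gapRW c a <= K * l.
Proof.
move=> [El l0].
have b_pos : forall x, 0 < b x by move=> x; exact: lt_le_trans (ab x).
have a_ge0 : forall x, 0 <= a x by move=> x; exact: ltW.
have b_ge0 : forall x, 0 <= b x by move=> x; exact: ltW.
have [f [Hf Np]] := eig_vec b_pos El.
have [lS H2] := eig_facts c_sym Hf.
have Sb0 : Sf b f = 0 by move/eqP: lS; rewrite mulf_eq0 (negbTE l0) => /eqP.
have [x0 _] : exists x0 : 'I_n, true.
  have [x fx] := Nf_ex (lt0r_neq0 Np).
  by exists x.
have Sa : 0 < \sum_(x < n) a x.
  rewrite (bigD1 x0) //=; apply: ltr_wpDr; first exact: sumr_ge0.
  exact: a_pos.
have Kpos : 0 < K.
  have := lt_le_trans (b_pos x0) (bK x0).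
  by rewrite pmulr_lgt0.
set m := Sf a f / \sum_(x < n) a x.
set g := fun x => f x - m.
have Sag : Sf a g = 0.
  have -> : Sf a g = Sf a f - m * \sum_(x < n) a x.
    by rewrite /Sf /g mulr_sumr -sumrB; apply: eq_bigr => x _; ring.
  by rewrite /m mulrC mulrA mulrC mulrA mulVf ?mul1r ?subrr // lt0r_neq0.
have Ray := gap_rayleigh c_sym c_ge0 c_conn a_pos Sag.
have BB : Bf c a g g <= Bf c b f f.
  rewrite /g Bf_shift; exact: Bf_mono.
have Nbg : Nf b f <= Nf b g.
  have -> : Nf b g = Nf b f - 2 * m * Sf b f + m ^+ 2 * \sum_(x < n) b x.
    rewrite /Nf /Sf /g !mulr_sumr -sumrB -big_split; apply: eq_bigr => x _ /=; ring.
  rewrite Sb0 mulr0 subr0 lerDl; apply: mulr_ge0; first exact: sqr_ge0.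
  exact: sumr_ge0.
have NgK : Nf b g <= K * Nf a g.
  rewrite /Nf mulr_sumr; apply: ler_sum => x _; rewrite mulrA.
  apply: ler_wpM2r; [exact: sqr_ge0 | exact: bK].
have g0 := gap_ge0 c_sym c_ge0 a_pos.
have Nag := Nf_ge0 g a_ge0.
have step1 : gapRW c a * Nf b f <= gapRW c a * (K * Nf a g).
  apply: ler_wpM2l => //; exact: le_trans Nbg NgK.
have step2 : gapRW c a * (K * Nf a g) <= K * (l * Nf b f).
  have e : gapRW c a * (K * Nf a g) = K * (2 * gapRW c a * Nf a g) / 2 by field.
  rewrite e.
  have : 2 * gapRW c a * Nf a g <= 2 * (l * Nf b f) by rewrite mulrA H2; exact: le_trans Ray BB.
  move=> h; have : K * (2 * gapRW c a * Nf a g) <= K * (2 * (l * Nf b f)).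
    by apply: ler_wpM2l => //; exact: ltW.
  lra.
have : gapRW c a * Nf b f <= (K * l) * Nf b f by rewrite -mulrA; exact: le_trans step1 step2.
by rewrite ler_pM2r.
Qed.


Unset Implicit Arguments. Set Strict Implicit.

Theorem lemma3p4 (R : realType) (n : nat) (c : 'I_n -> 'I_n -> R)
  (c_sym : forall x y, c x y = c y x) (c_ge0 : forall x y, 0 <= c x y)
  (c_conn : wconnected c)
  (alpha : 'I_n -> R) (alpha_pos : forall x, 0 < alpha x)
  (k : nat) (k_pos : (0 < k)%N) :
  inf [set gapRW c (fun x => alpha x + (xi x)%:R) | xi in (Xi n k.-1)]
  >= inf (range alpha) / (inf (range alpha) + (k.-1)%:R) * gapRW c alpha.
Proof.
have a_ge0 : forall x, 0 <= alpha x by move=> x; exact: ltW.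
have bpos : forall xi : 'I_n -> nat, forall x, 0 < alpha x + (xi x)%:R.
  by move=> xi x; have := alpha_pos x; have := ler0n R (xi x); lra.
have [Wne|We] := pselect (Wset alpha !=set0); last first.
  have gap0 : gapRW c alpha = 0.
    rewrite /gapRW.
    have -> : [set l : R | eigenvalue (- gen_mx c alpha)^T l /\ l != 0] = set0.
      apply/seteqP; split => l // [El l0]; exfalso; apply: We.
      have [f [Hf Np]] := eig_vec alpha_pos El.
      have [lS _] := eig_facts c_sym Hf.
      have Sf0 : Sf alpha f = 0 by move/eqP: lS; rewrite mulf_eq0 (negbTE l0) => /eqP.
      exact: (ex_intro _ _ (normalize a_ge0 Sf0 (lt0r_neq0 Np))).
    exact: inf0.
  rewrite gap0 mulr0; apply: inf_ge; last by right.
  move=> y [xi _ <-]; exact: (gap_ge0 c_sym c_ge0 (bpos xi)).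
have [v [Sv Nv]] := Wne.
set h0 := fv v in Sv Nv.
have [x1 hx1] : exists x1, h0 x1 != 0 by apply: (@Nf_ex _ _ alpha h0); rewrite Nv oner_neq0.
have [xm _ Hxm] := @arg_minP _ R _ x1 xpredT alpha isT.
have minE : inf (range alpha) = alpha xm.
  apply/le_anti/andP; split.
    apply: ge_inf; last by exists xm.
    by exists 0 => y [j _ <-]; exact: a_ge0.
  apply: lb_le_inf; first by exists (alpha xm), xm.
  by move=> y [j _ <-]; exact: Hxm.
rewrite minE.
set m := alpha xm.
have mpos : 0 < m by exact: alpha_pos.
set k1 := (k.-1)%:R : R.
have k1ge0 : 0 <= k1 by exact: ler0n.
set K := (m + k1) / m.
have Kpos : 0 < K by rewrite divr_gt0 // ltr_wpDr.
have -> : m / (m + k1) = K^-1 by rewrite invf_div.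
apply: inf_ge.
  move=> y [xi Xxi <-].
  set beta := fun x => alpha x + (xi x)%:R.
  have b_pos : forall x, 0 < beta x := bpos xi.
  have ab : forall x, alpha x <= beta x.
    by move=> x; rewrite /beta lerDl ler0n.
  have bK : forall x, beta x <= K * alpha x.
    move=> x.
    have xik : (xi x <= k.-1)%N.
      rewrite -Xxi (bigD1 x) //=; exact: leq_addr.
    have e : K * alpha x = alpha x + k1 * (alpha x / m) by rewrite /K; field; exact: lt0r_neq0.
    rewrite e /beta lerD2l.
    have h1 : 1 <= alpha x / m by rewrite ler_pdivlMr // mul1r; exact: Hxm.
    have h2 : (xi x)%:R <= k1 by rewrite ler_nat.
    nra.
  apply: inf_ge.
    move=> l Sl; have := key_beta c_sym c_ge0 c_conn alpha_pos ab bK Sl.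
    by rewrite [K^-1 * _]mulrC ler_pdivrMr // [l * K]mulrC.
  left.
  set hb := fun x => alpha x * h0 x / beta x.
  have Sb : Sf beta hb = 0.
    rewrite -Sv /Sf; apply: eq_bigr => x _; rewrite /hb; field.
    exact: lt0r_neq0.
  have Nb : Nf beta hb != 0.
    apply: lt0r_neq0; apply: (@Nf_pos _ _ beta hb b_pos x1).
    rewrite /hb !mulf_neq0 //; first exact: lt0r_neq0.
    by rewrite invr_neq0 // lt0r_neq0.
  have [l [El l0 _]] := rayleigh c_sym c_ge0 c_conn b_pos
     (ex_intro _ _ (normalize (fun x => ltW (b_pos x)) Sb Nb)).
  by exists l.
left.
exists (gapRW c (fun x => alpha x + ((fun y => if y == x1 then k.-1 else 0%N) x)%:R)).
exists (fun y => if y == x1 then k.-1 else 0%N) => //.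
rewrite /Xi /= (bigD1 x1) //= eqxx big1 ?addn0 // => x /negbTE ->.
by [].
Qed.
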